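(* Let $\mathbf{X}=[\mathbf{x}_1,\ldots,\mathbf{x}_n]\in\mathbb{R}^{d\times n}$ have nonzero columns, let $m$ be an integer with $2\le m<d$, and let $0<\alpha<1$. Let the random sampling matrices $\mathbf{S}_i$ and the estimator $\mathbf{C}_e=\widehat{\mathbf{C}}_1-\widehat{\mathbf{C}}_2$ be constructed by the DACE procedure described in the context, i.e. $m$ entries are sampled from each $\mathbf{x}_i$ with replacement according to the probabilities $p_{ki}=\alpha\frac{|x_{ki}|}{\|\mathbf{x}_i\|_1}+(1-\alpha)\frac{x_{ki}^2}{\|\mathbf{x}_i\|_2^2}$. Then $\mathbf{C}_e$ is an unbiased estimator of $\mathbf{C}=\frac{1}{n}\sum_{i=1}^n\mathbf{x}_i\mathbf{x}_i^T=\frac1n\mathbf{X}\mathbf{X}^T$, i.e. $\mathbb{E}[\mathbf{C}_e]=\mathbf{C}$.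
   Context: DACE construction. Given $\mathbf{X}=[\mathbf{x}_1,\ldots,\mathbf{x}_n]\in\mathbb{R}^{d\times n}$ with $\mathbf{x}_i=(x_{1i},\ldots,x_{di})^T$, an integer $m$ with $2\le m<d$ and $\alpha\in(0,1)$, set for $k\in[d]=\{1,\dots,d\}$ and $i\in[n]$: $p_{ki}=\alpha\frac{|x_{ki}|}{\|\mathbf{x}_i\|_1}+(1-\alpha)\frac{x_{ki}^2}{\|\mathbf{x}_i\|_2^2}$ (a probability distribution on $[d]$ for each $i$). For every $i$ and $j\in[m]$, draw indices $t_{ji}\in[d]$ independently (over all $i,j$) with $\mathbb{P}(t_{ji}=k)=p_{ki}$. Let $\mathbf{e}_1,\ldots,\mathbf{e}_d$ be the standard basis of $\mathbb{R}^d$ and let $\mathbf{S}_i\in\mathbb{R}^{d\times m}$ be the matrix whose $j$-th column is $\mathbf{e}_{t_{ji}}/\sqrt{m\,p_{t_{ji}i}}$. For a square matrix $\mathbf{A}$, $\mathbb{D}(\mathbf{A})$ is the diagonal matrix with the same main diagonal as $\mathbf{A}$; for a vector $\mathbf{b}$, $\mathbb{D}(\mathbf{b})$ is the diagonal matrix with $\mathbf{b}$ on its diagonal. Let $b_{ki}=\frac{1}{1+(m-1)p_{ki}}$ and $\mathbf{b}_i=(b_{1i},\ldots,b_{di})^T$. Define $\widehat{\mathbf{C}}_1=\frac{m}{nm-n}\sum_{i=1}^n\mathbf{S}_i\mathbf{S}_i^T\mathbf{x}_i\mathbf{x}_i^T\mathbf{S}_i\mathbf{S}_i^T$, $\widehat{\mathbf{C}}_2=\frac{m}{nm-n}\sum_{i=1}^n\mathbb{D}(\mathbf{S}_i\mathbf{S}_i^T\mathbf{x}_i\mathbf{x}_i^T\mathbf{S}_i\mathbf{S}_i^T)\mathbb{D}(\mathbf{b}_i)$,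 and $\mathbf{C}_e=\widehat{\mathbf{C}}_1-\widehat{\mathbf{C}}_2$. *)

(* Defs.v *)
(* discrete probability over the finite sample space of all
   index draws t : 'I_n * 'I_m -> 'I_d, with the product (independent) law. *)
From HB Require Import structures.
From mathcomp Require Import all_boot all_order all_algebra.
Set Implicit Arguments. Unset Strict Implicit. Unset Printing Implicit Defensive.
Import Order.TTheory GRing.Theory Num.Theory.
Local Open Scope ring_scope.

Section DACE.
Variables (R : rcfType) (d n m : nat) (alpha : R) (X : 'M[R]_(d, n)).

Definition xcol (i : 'I_n) : 'cV[R]_d := col i X.
Definition norm1 (i : 'I_n) : R := \sum_(k < d) `|X k i|.
Definition norm2sq (i : 'I_n) : R := \sum_(k < d) (X k i) ^+ 2.

Definition pki (k : 'I_d) (i : 'I_n) : R :=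
  alpha * (`|X k i| / norm1 i) + (1 - alpha) * ((X k i) ^+ 2 / norm2sq i).

(* an outcome of all draws: t (i, j) = t_{ji} *)
Definition outcome := {ffun 'I_n * 'I_m -> 'I_d}.

Definition prob (t : outcome) : R := \prod_(ij : 'I_n * 'I_m) pki (t ij) ij.1.

Definition Smat (t : outcome) (i : 'I_n) : 'M[R]_(d, m) :=
  \matrix_(k < d, j < m)
    (if k == t (i, j) then (Num.sqrt (m%:R * pki (t (i, j)) i))^-1 else 0).

Definition Dmat (A : 'M[R]_d) : 'M[R]_d := diag_mx (\row_k A k k).
Definition Dvec (b : 'cV[R]_d) : 'M[R]_d := diag_mx (\row_k b k 0).

Definition bvec (i : 'I_n) : 'cV[R]_d :=
  \col_k (1 + (m%:R - 1) * pki k i)^-1.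

Definition SSxxSS (t : outcome) (i : 'I_n) : 'M[R]_d :=
  Smat t i *m (Smat t i)^T *m xcol i *m (xcol i)^T *m Smat t i *m (Smat t i)^T.

Definition coef : R := m%:R / (n%:R * m%:R - n%:R).

Definition C1hat (t : outcome) : 'M[R]_d := coef *: \sum_(i < n) SSxxSS t i.
Definition C2hat (t : outcome) : 'M[R]_d :=
  coef *: \sum_(i < n) (Dmat (SSxxSS t i) *m Dvec (bvec i)).
Definition Ce (t : outcome) : 'M[R]_d := C1hat t - C2hat t.

Definition Emx (Y : outcome -> 'M[R]_d) : 'M[R]_d := \sum_(t : outcome) prob t *: Y t.

Definition Cov : 'M[R]_d := n%:R^-1 *: \sum_(i < n) (xcol i *m (xcol i)^T).

End DACE.

(* Main.v *)
Require Import Defs.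
From HB Require Import structures.
From mathcomp Require Import all_boot all_order all_algebra.
From mathcomp Require Import ring lra.
Set Warnings "-notation-overridden,-ambiguous-paths".
Import Order.TTheory GRing.Theory Num.Theory.
Local Open Scope ring_scope.

Section Proof.
Variables (R : rcfType) (d n m : nat) (alpha : R) (X : 'M[R]_(d, n)).
Hypotheses (hcols : forall i : 'I_n, col i X != 0)
  (hm2 : (2 <= m)%N) (ha0 : 0 < alpha) (ha1 : alpha < 1).

Local Notation p := (pki alpha X).
Local Notation out := (outcome d n m).

Lemma norm1_ge0 i : 0 <= norm1 X i.
Proof. by apply: sumr_ge0 => k _; rewrite normr_ge0. Qed.
Lemma norm2sq_ge0 i : 0 <= norm2sq X i.
Proof. by apply: sumr_ge0 => k _; rewrite sqr_ge0. Qed.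

Lemma p_ge0 k i : 0 <= p k i.
Proof.
rewrite /pki; apply: addr_ge0; apply: mulr_ge0.
- exact: ltW.
- by apply: divr_ge0; [rewrite normr_ge0|exact: norm1_ge0].
- by rewrite subr_ge0 ltW.
- by apply: divr_ge0; [rewrite sqr_ge0|exact: norm2sq_ge0].
Qed.

Lemma abs_le_norm1 k i : `|X k i| <= norm1 X i.
Proof.
rewrite /norm1 (bigD1 k) //= lerDl; apply: sumr_ge0 => j _; exact: normr_ge0.
Qed.
Lemma sq_le_norm2 k i : X k i ^+ 2 <= norm2sq X i.
Proof.
rewrite /norm2sq (bigD1 k) //= lerDl; apply: sumr_ge0 => j _; exact: sqr_ge0.
Qed.

Lemma p_gt0 k i : X k i != 0 -> 0 < p k i.
Proof.
move=> hx; rewrite /pki; apply: ltr_wpDr.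
  by apply: mulr_ge0; [rewrite subr_ge0 ltW|apply: divr_ge0; [rewrite sqr_ge0|exact: norm2sq_ge0]].
apply: mulr_gt0 => //; apply: divr_gt0; first by rewrite normr_gt0.
by apply: lt_le_trans (abs_le_norm1 k i); rewrite normr_gt0.
Qed.

Lemma psum i : \sum_k p k i = 1.
Proof.
have [k hk] : exists k, X k i != 0.
  apply/existsP; move: (hcols i); apply: contraR; rewrite negb_exists => /forallP h.
  apply/eqP/matrixP => a b; rewrite !mxE; move: (h a); by rewrite negbK => /eqP.
have n1 : norm1 X i != 0.
  by rewrite gt_eqF // (lt_le_trans _ (abs_le_norm1 k i)) // normr_gt0.
have n2 : norm2sq X i != 0.
  by rewrite gt_eqF // (lt_le_trans _ (sq_le_norm2 k i)) // lt_def sqr_ge0 expf_eq0 (negbTE hk) andbF.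
rewrite /pki big_split /= -!mulr_sumr -!mulr_suml -/(norm1 X i) -/(norm2sq X i).
by rewrite !divff // !mulr1 addrC subrK.
Qed.

Definition Es (f : out -> R) : R := \sum_(t : out) prob alpha X t * f t.

Lemma Es_ext f g : (forall t, f t = g t) -> Es f = Es g.
Proof. by move=> h; rewrite /Es; apply: eq_bigr => t _; rewrite h. Qed.

Lemma Es_prod (G : 'I_n * 'I_m -> 'I_d -> R) :
  Es (fun t => \prod_ij G ij (t ij)) = \prod_ij \sum_k p k ij.1 * G ij k.
Proof.
rewrite bigA_distr_bigA /Es; apply: eq_bigr => t _.
by rewrite /prob -big_split.
Qed.

Lemma EsD f g : Es (fun t => f t + g t) = Es f + Es g.
Proof. by rewrite /Es -big_split; apply: eq_bigr => t _; rewrite mulrDr. Qed.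
Lemma EsZ c f : Es (fun t => c * f t) = c * Es f.
Proof. by rewrite /Es mulr_sumr; apply: eq_bigr => t _; rewrite mulrCA. Qed.
Lemma EsN f : Es (fun t => - f t) = - Es f.
Proof. by rewrite /Es -sumrN; apply: eq_bigr => t _; rewrite mulrN. Qed.
Lemma Es_sum (I : finType) (f : I -> out -> R) :
  Es (fun t => \sum_j f j t) = \sum_j Es (f j).
Proof.
rewrite /Es exchange_big /=; apply: eq_bigr => t _; by rewrite mulr_sumr.
Qed.

Lemma Es1 (a : 'I_n * 'I_m) (F : 'I_d -> R) :
  Es (fun t => F (t a)) = \sum_k p k a.1 * F k.
Proof.
pose G ij := if ij == a then F else fun _ : 'I_d => 1 : R.
have Ga : G a = F by rewrite /G eqxx.
have Go ij : ij != a -> G ij = fun _ => 1 by rewrite /G => /negbTE ->.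
transitivity (Es (fun t => \prod_ij G ij (t ij))).
  apply: Es_ext => t; rewrite (bigD1 a) //= Ga big1 ?mulr1 //.
  by move=> ij /Go ->.
rewrite Es_prod (bigD1 a) //= Ga [X in _ * X]big1 ?mulr1 //.
move=> ij /Go ->; transitivity (\sum_k p k ij.1); last exact: psum.
by apply: eq_bigr => k _; rewrite mulr1.
Qed.

Lemma Es2 (a b : 'I_n * 'I_m) (F H : 'I_d -> R) : a != b ->
  Es (fun t => F (t a) * H (t b)) =
  (\sum_k p k a.1 * F k) * (\sum_k p k b.1 * H k).
Proof.
move=> ab.
pose G ij := if ij == a then F else if ij == b then H else fun _ : 'I_d => 1 : R.
have Ga : G a = F by rewrite /G eqxx.
have Gb : G b = H by rewrite /G eq_sym (negbTE ab) eqxx.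
have Go ij : ij != a -> ij != b -> G ij = fun _ => 1.
  by rewrite /G => /negbTE -> /negbTE ->.
have ba : b != a by rewrite eq_sym.
transitivity (Es (fun t => \prod_ij G ij (t ij))).
  apply: Es_ext => t; rewrite (bigD1 a) //= (bigD1 b) //= Ga Gb.
  rewrite big1 ?mulr1 // => ij /andP[ia ib]; by rewrite Go.
rewrite Es_prod (bigD1 a) //= (bigD1 b) //= Ga Gb [X in _ * (_ * X)]big1 ?mulr1 //.
move=> ij /andP[ia ib]; rewrite Go //; transitivity (\sum_k p k ij.1); last exact: psum.
by apply: eq_bigr => k _; rewrite mulr1.
Qed.

Definition w (t : out) i k : R := \sum_(j < m) (k == t (i, j))%:R.
Definition y k i : R := X k i / (m%:R * p k i).

Lemma sqrt_inv_sq k i :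
  (Num.sqrt (m%:R * p k i))^-1 * (Num.sqrt (m%:R * p k i))^-1 = (m%:R * p k i)^-1.
Proof.
by rewrite -invfM -expr2 sqr_sqrtr // mulr_ge0 ?ler0n ?p_ge0.
Qed.

Lemma A_entry (t : out) (i : 'I_n) (k k' : 'I_d) :
  (Smat alpha X t i *m (Smat alpha X t i)^T) k k' =
  (k == k')%:R * (w t i k / (m%:R * p k i)).
Proof.
rewrite !mxE /w; case: (eqVneq k k') => [<-|kk].
  rewrite mul1r mulr_suml; apply: eq_bigr => j _; rewrite !mxE.
  case: eqP => [->|_]; last by rewrite !mul0r.
  by rewrite sqrt_inv_sq mul1r.
rewrite mul0r big1 // => j _; rewrite !mxE.
case: eqP => [ek|_]; last by rewrite mul0r.
by rewrite -ek; move: kk; rewrite eq_sym => /negbTE ->; rewrite mulr0.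
Qed.

Lemma Ax_entry (t : out) (i : 'I_n) (k : 'I_d) :
  (Smat alpha X t i *m (Smat alpha X t i)^T *m Defs.xcol X i) k 0 = w t i k * y k i.
Proof.
rewrite mxE (bigD1 k) //= [X in _ + X]big1 => [|k' kk].
  by rewrite addr0 A_entry eqxx mul1r /Defs.xcol mxE /y mulrAC -mulrA.
by rewrite A_entry eq_sym (negbTE kk) !mul0r.
Qed.

Lemma SS_entry (t : out) (i : 'I_n) (k l : 'I_d) :
  SSxxSS alpha X t i k l = (w t i k * y k i) * (w t i l * y l i).
Proof.
have -> : SSxxSS alpha X t i = (Smat alpha X t i *m (Smat alpha X t i)^T *m Defs.xcol X i) *m
    (Smat alpha X t i *m (Smat alpha X t i)^T *m Defs.xcol X i)^T.
  by rewrite /SSxxSS !trmx_mul trmxK !mulmxA.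
by rewrite [LHS]mxE big_ord1 [Y in _ * Y]mxE !Ax_entry.
Qed.

Lemma psel i k : \sum_k' p k' i * (k == k')%:R = p k i.
Proof.
rewrite (bigD1 k) //= eqxx mulr1 big1 ?addr0 // => k' kk.
by rewrite eq_sym (negbTE kk) mulr0.
Qed.

Lemma sum_const_but (j1 : 'I_m) (c : R) : \sum_(j2 | j2 != j1) c = (m%:R - 1) * c.
Proof.
have h : \sum_(j2 < m) c = c + \sum_(j2 | j2 != j1) c by rewrite (bigD1 j1).
have -> : \sum_(j2 | j2 != j1) c = \sum_(j2 < m) c - c by rewrite h addrC addKr.
by rewrite sumr_const card_ord mulrBl mul1r mulr_natl.
Qed.

Lemma Eww i k l : Es (fun t => w t i k * w t i l) =
  m%:R * ((k == l)%:R * p k i + (m%:R - 1) * (p k i * p l i)).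
Proof.
transitivity (Es (fun t => \sum_(j1 < m) \sum_(j2 < m)
   ((k == t (i, j1))%:R * (l == t (i, j2))%:R))).
  apply: Es_ext => t; rewrite /w mulr_suml; apply: eq_bigr => j1 _.
  by rewrite mulr_sumr.
rewrite [RHS](_ : _ = \sum_(j1 < m) ((k == l)%:R * p k i + (m%:R - 1) * (p k i * p l i))); last first.
  by rewrite sumr_const card_ord mulr_natl.
rewrite Es_sum; apply: eq_bigr => j1 _; rewrite Es_sum (bigD1 j1) //=; congr (_ + _).
  rewrite (Es1 (i, j1) (fun k' => (k == k')%:R * (l == k')%:R)) /=.
  rewrite (bigD1 k) //= eqxx mul1r big1 ?addr0.
    by case: (eqVneq k l) => [->|kl]; rewrite ?eqxx ?mul1r ?mulr1 // mulr0 mul0r.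
  by move=> k' kk; rewrite eq_sym (negbTE kk) mul0r mulr0.
rewrite -(sum_const_but j1); apply: eq_bigr => j2 jj.
rewrite (Es2 (i, j1) (i, j2) (fun k' => (k == k')%:R) (fun k' => (l == k')%:R)) /=.
  by rewrite !psel.
by apply: contra jj => /eqP [->].
Qed.

Definition bb k i : R := (1 + (m%:R - 1) * p k i)^-1.

Lemma Ce_entry (t : out) (k l : 'I_d) : Ce alpha X t k l =
  coef R n m * \sum_i (SSxxSS alpha X t i k l - (k == l)%:R * (bb k i * SSxxSS alpha X t i k k)).
Proof.
rewrite /Ce /C1hat /C2hat !mxE !summxE -mulrBr -sumrB; congr (_ * _).
apply: eq_bigr => i _; congr (_ - _).
rewrite /Dmat /Dvec /bvec mul_diag_mx; move: (SSxxSS alpha X t i) => M; rewrite !mxE.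
have [->|kl] := eqVneq k l; first by rewrite mulr1n mul1r /bb mulrC.
by rewrite mulr0n mulr0 mul0r.
Qed.

Lemma ESS i k l : Es (fun t => SSxxSS alpha X t i k l) =
  y k i * y l i * (m%:R * ((k == l)%:R * p k i + (m%:R - 1) * (p k i * p l i))).
Proof.
rewrite -Eww -EsZ; apply: Es_ext => t; rewrite SS_entry.
by rewrite mulrACA mulrC (mulrC (y k i)) (mulrC (y l i)).
Qed.

Lemma ypm k i : y k i * (m%:R * p k i) = X k i.
Proof.
have [hx|hx] := eqVneq (X k i) 0; first by rewrite /y hx !mul0r.
rewrite /y divfK // mulf_neq0 //; last by rewrite gt_eqF ?p_gt0.
by rewrite pnatr_eq0 -lt0n (ltn_trans _ hm2).
Qed.

Lemma per_i (i : 'I_n) k l :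
  coef R n m * (Es (fun t => SSxxSS alpha X t i k l) -
     (k == l)%:R * (bb k i * Es (fun t => SSxxSS alpha X t i k k))) =
  n%:R^-1 * (X k i * X l i).
Proof.
have hn : n%:R != 0 :> R by rewrite pnatr_eq0 -lt0n (leq_ltn_trans _ (ltn_ord i)).
have hm : m%:R != 0 :> R by rewrite pnatr_eq0 -lt0n (ltn_trans _ hm2).
have hm1 : m%:R - 1 != 0 :> R.
  by rewrite subr_eq0 pnatr_eq1 neq_ltn hm2 orbT.
have hc : coef R n m = m%:R / (n%:R * (m%:R - 1)) by rewrite /coef mulrBr mulr1.
rewrite hc !ESS.
have [<-|kl] := eqVneq k l; last first.
  rewrite (_ : false%:R = 0 :> R) // !mul0r subr0 add0r -(ypm k i) -(ypm l i).
  field; by rewrite hn hm1.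
have [hx|hx] := eqVneq (X k i) 0.
  have y0 : y k i = 0 by rewrite /y hx mul0r.
  by rewrite y0 hx !(mul0r, mulr0, subr0).
have hp : p k i != 0 by rewrite gt_eqF ?p_gt0.
have hb : 1 + (m%:R - 1) * p k i != 0.
  rewrite gt_eqF // ltr_pwDl // ?ltr01 // mulr_ge0 ?p_ge0 // subr_ge0.
  by rewrite (ler_nat R 1 m) ltnW.
rewrite (_ : true%:R = 1 :> R) // -(ypm k i) /bb !mul1r.
rewrite eqxx mul1r.
by field; rewrite hn hm1 hb.
Qed.

Lemma main_eq : Emx alpha X (@Ce R d n m alpha X) = Cov X.
Proof.
apply/matrixP => k l.
transitivity (Es (fun t => Ce alpha X t k l)).
  rewrite /Emx summxE; apply: eq_bigr => t _; move: (Ce alpha X t) => M.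
  by rewrite mxE.
rewrite (Es_ext _ _ (fun t => Ce_entry t k l)) EsZ Es_sum mulr_sumr.
rewrite /Cov [RHS]mxE summxE mulr_sumr; apply: eq_bigr => i _.
have -> : (Defs.xcol X i *m (Defs.xcol X i)^T) k l = X k i * X l i.
  by rewrite [LHS]mxE big_ord1 !mxE.
rewrite -per_i; congr (_ * _).
rewrite (EsD (fun t => SSxxSS alpha X t i k l)) EsN EsZ EsZ.
done.
Qed.

End Proof.

Theorem theorem1 (R : rcfType) (d n m : nat) (alpha : R) (X : 'M[R]_(d, n))
  (hcols : forall i : 'I_n, col i X != 0)
  (hm2 : (2 <= m)%N) (hmd : (m < d)%N)
  (ha0 : 0 < alpha) (ha1 : alpha < 1) :
  Emx alpha X (@Ce R d n m alpha X) = Cov X.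
Proof. exact: (@main_eq R d n m alpha X hcols hm2 ha0 ha1). Qed.
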